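(* There is a functor $V:\mathbf{DBoo}\to\mathbf{CLCA}$ which is the identity on objects and sends a $\mathbf{DBoo}$-morphism $\varphi:(A,C,\mathbb B)\to(A',C',\mathbb B')$ to $\varphi^{\vee}$, where $\varphi^{\vee}(a)=\bigvee\{\varphi(b)\mid b\in\mathbb B,\ b\ll a\}$.
   Context: A contact algebra is a Boolean algebra $A$ with a relation $C$ such that $a\,C\,a$ for $a>0$; $a\,C\,b\Rightarrow a,b>0$; $C$ symmetric; $a\,C\,(b\vee c)$ iff $a\,C\,b$ or $a\,C\,c$; $a\ll b$ iff not $a\,C\,b^*$. A complete local contact algebra $(A,C,\mathbb B)$ is a contact algebra with $A$ complete and an ideal $\mathbb B$ such that (BC1) $a\ll c$, $a\in\mathbb B\Rightarrow a\ll b\ll c$ for some $b\in\mathbb B$; (BC2) $a\,C\,b\Rightarrow a\,C\,(c\wedge b)$ for some $c\in\mathbb B$; (BC3) each $a\ne0$ has $0\ne b\in\mathbb B$ with $b\ll a$. $\mathbf{DBoo}$: objects complete local contact algebras; morphisms Boolean homomorphisms $\varphi:A_1\to A_2$ reflecting contact and such that each $b'\in\mathbb B_2$ satisfies $b'\le\varphi(b)$ for some $b\in\mathbb B_1$; composition is map composition. $\mathbf{CLCA}$: same objects; morphisms maps $\alpha:A_1\to A_2$ with (CLC1) $\alpha(0)=0$; (CLC2) $\alpha(a\wedge b)=\alpha(a)\wedge\alpha(b)$; (CLC3) $a\ll b$, $a\in\mathbb B_1\Rightarrow(\alpha(a^* ))^*\ll\alpha(b)$; (CLC4) each $b\in\mathbb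 B_2$ has $a\in\mathbb B_1$ with $b\le\alpha(a)$; (CLC5) $\alpha(a)=\bigvee\{\alpha(b)\mid b\in\mathbb B_1,\ b\ll a\}$; composition $\psi\diamond\varphi=(\psi\circ\varphi)^{\vee}$ where $f^{\vee}(a)=\bigvee\{f(b)\mid b\in\mathbb B,\ b\ll a\}$. *)

(* Defs.v *)
(* Boolean algebras = complemented distributive lattices with
   top and bottom (ctbDistrLatticeType). *)
From mathcomp Require Import all_boot all_order.
From Stdlib Require Import ClassicalEpsilon.
Set Implicit Arguments. Unset Strict Implicit. Unset Printing Implicit Defensive.
Import Order.Theory.
Local Open Scope order_scope.

Section Defs.
Context {d : Order.disp_t} {T : ctbDistrLatticeType d}.

Definition is_ub (S : T -> Prop) (x : T) := forall y, S y -> y <= x.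
Definition is_lub (S : T -> Prop) (x : T) :=
  is_ub S x /\ forall z, is_ub S z -> x <= z.
Definition complete_BA := forall S : T -> Prop, exists x, is_lub S x.
(* the join of S, chosen by Hilbert's epsilon; it is the lub when T is complete *)
Definition bigjoin (S : T -> Prop) : T := epsilon (inhabits \bot) (is_lub S).

Definition contact_algebra (C : T -> T -> Prop) :=
  (forall a, a != \bot -> C a a) /\
  (forall a b, C a b -> a != \bot /\ b != \bot) /\
  (forall a b, C a b -> C b a) /\
  (forall a b c, C a (b `|` c) <-> C a b \/ C a c).

Definition wbelow (C : T -> T -> Prop) (a b : T) := ~ C a (~` b).

Definition is_ideal (B : T -> Prop) :=
  B \bot /\ (forall a b, a <= b -> B b -> B a) /\
  (forall a b, B a -> B b -> B (a `|` b)).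

Definition complete_LCA (C : T -> T -> Prop) (B : T -> Prop) :=
  complete_BA /\ contact_algebra C /\ is_ideal B /\
      (forall a c, wbelow C a c -> B a ->
         exists b, B b /\ wbelow C a b /\ wbelow C b c) /\
      (forall a b, C a b -> exists c, B c /\ C a (c `&` b)) /\
      (forall a, a != \bot -> exists b, B b /\ b != \bot /\ wbelow C b a).
End Defs.

Section Mor.
Context {d1 d2 : Order.disp_t} {T1 : ctbDistrLatticeType d1}
        {T2 : ctbDistrLatticeType d2}.
Variables (C1 : T1 -> T1 -> Prop) (B1 : T1 -> Prop)
          (C2 : T2 -> T2 -> Prop) (B2 : T2 -> Prop).

Definition boolean_hom (f : T1 -> T2) :=
  f \bot = \bot /\ f \top = \top /\
  (forall a b, f (a `&` b) = f a `&` f b) /\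
  (forall a b, f (a `|` b) = f a `|` f b) /\
  (forall a, f (~` a) = ~` f a).

Definition DBoo_mor (f : T1 -> T2) :=
  boolean_hom f /\
  (forall a b, C2 (f a) (f b) -> C1 a b) /\
  (forall b', B2 b' -> exists b, B1 b /\ b' <= f b).

Definition vee (f : T1 -> T2) (a : T1) : T2 :=
  bigjoin (fun y => exists b, B1 b /\ wbelow C1 b a /\ y = f b).

Definition CLCA_mor (f : T1 -> T2) :=
  f \bot = \bot /\
  (forall a b, f (a `&` b) = f a `&` f b) /\
  (forall a b, wbelow C1 a b -> B1 a -> wbelow C2 (~` f (~` a)) (f b)) /\
  (forall b, B2 b -> exists a, B1 a /\ b <= f a) /\
  (forall a, f a = vee f a).
End Mor.

Definition CLCA_comp {d1 d2 d3 : Order.disp_t} {T1 : ctbDistrLatticeType d1}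
  {T2 : ctbDistrLatticeType d2} {T3 : ctbDistrLatticeType d3}
  (C1 : T1 -> T1 -> Prop) (B1 : T1 -> Prop)
  (psi : T2 -> T3) (phi : T1 -> T2) : T1 -> T3 :=
  vee C1 B1 (fun a => psi (phi a)).

(* Main.v *)
Require Import Defs.
From mathcomp Require Import all_boot all_order.
From Stdlib Require Import ClassicalEpsilon FunctionalExtensionality.
Import Order.Theory.
Local Open Scope order_scope.
Set Implicit Arguments. Unset Strict Implicit.

Section Gen.
Context {d : Order.disp_t} {T : ctbDistrLatticeType d}.
Variables (C : T -> T -> Prop) (B : T -> Prop).
Hypothesis H : complete_LCA C B.

Lemma leP_meet (x y : T) : (x <= y) = (x `&` ~` y == \bot).
Proof. by rewrite disj_leC complK. Qed.

Lemma Cmono_r a b c : C a b -> b <= c -> C a c.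
Proof.
case: H => _ [[_ [_ [_ J]]] _] Cab /join_idPr E.
by rewrite -E; apply/J; left.
Qed.

Lemma Csym a b : C a b -> C b a.
Proof. by case: H => _ [[_ [_ [S _]]] _]; apply: S. Qed.

Lemma Cmono_l a b c : C a b -> a <= c -> C c b.
Proof. by move=> Cab ac; apply: Csym; apply: Cmono_r ac; apply: Csym. Qed.

Lemma Cnb a b : C a b -> a != \bot.
Proof. by case: H => _ [[_ [N _]] _] /N []. Qed.

Lemma Crefl a : a != \bot -> C a a.
Proof. by case: H => _ [[R _] _]; apply: R. Qed.

Lemma wb_le a b : wbelow C a b -> a <= b.
Proof.
move=> W; rewrite leP_meet; case: eqP => // /eqP /Crefl Cm.
exfalso; apply: W; exact: (Cmono_l (Cmono_r Cm (leIr _ _)) (leIl _ _)).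
Qed.

Lemma wb_mono a' a b b' : a' <= a -> wbelow C a b -> b <= b' -> wbelow C a' b'.
Proof.
move=> h1 W h2 Cab; apply: W; apply: (Cmono_l (Cmono_r Cab _) h1).
by rewrite leC.
Qed.

Lemma wb_top a : wbelow C a \top.
Proof. by rewrite /wbelow compl1 => /Csym /Cnb; rewrite eqxx. Qed.

Lemma wb_compl a b : wbelow C a b -> wbelow C (~` b) (~` a).
Proof. by move=> W; rewrite /wbelow complK => /Csym. Qed.

Lemma Bdown a b : a <= b -> B b -> B a.
Proof. by case: H => _ [_ [[_ [D _]] _]]; apply: D. Qed.

Lemma Bbot : B \bot.
Proof. by case: H => _ [_ [[Z _] _]]. Qed.

Lemma BC1 a c : wbelow C a c -> B a -> exists b, B b /\ wbelow C a b /\ wbelow C b c.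
Proof. by case: H => _ [_ [_ [X _]]]; apply: X. Qed.

Lemma BC3 a : a != \bot -> exists b, B b /\ b != \bot /\ wbelow C b a.
Proof. by case: H => _ [_ [_ [_ [_ X]]]]; apply: X. Qed.

Lemma bigjoin_lub (S : T -> Prop) : is_lub S (bigjoin S).
Proof.
rewrite /bigjoin; apply: epsilon_spec.
by case: H => Hc _; apply: Hc.
Qed.

End Gen.

Section Vee.
Context {d1 d2 : Order.disp_t} {T1 : ctbDistrLatticeType d1}
        {T2 : ctbDistrLatticeType d2}.
Variables (C1 : T1 -> T1 -> Prop) (B1 : T1 -> Prop)
          (C2 : T2 -> T2 -> Prop) (B2 : T2 -> Prop).
Hypothesis H1 : complete_LCA C1 B1.
Hypothesis H2 : complete_LCA C2 B2.

Lemma vee_ub (f : T1 -> T2) a b : B1 b -> wbelow C1 b a -> f b <= vee C1 B1 f a.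
Proof. by move=> Bb W; case: (bigjoin_lub H2 (fun y => exists b, B1 b /\ wbelow C1 b a /\ y = f b)) => U _; apply: U; exists b. Qed.

Lemma vee_least (f : T1 -> T2) a z :
  (forall b, B1 b -> wbelow C1 b a -> f b <= z) -> vee C1 B1 f a <= z.
Proof.
move=> K; case: (bigjoin_lub H2 (fun y => exists b, B1 b /\ wbelow C1 b a /\ y = f b)) => _ L.
by apply: L => y [b [Bb [W ->]]]; apply: K.
Qed.

Lemma vee_mono (f : T1 -> T2) a a' : a <= a' -> vee C1 B1 f a <= vee C1 B1 f a'.
Proof.
move=> h; apply: vee_least => b Bb W; apply: vee_ub => //.
exact: (wb_mono H1 (le_refl _) W h).
Qed.

Lemma hom_mono (f : T1 -> T2) : boolean_hom f -> forall a b, a <= b -> f a <= f b.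
Proof.
move=> [_ [_ [_ [J _]]]] a b /join_idPr E.
by rewrite -E J leUl.
Qed.

Lemma vee_le_f (f : T1 -> T2) : boolean_hom f -> forall a, vee C1 B1 f a <= f a.
Proof.
move=> hf a; apply: vee_least => b _ W; apply: hom_mono => //.
exact: wb_le H1 _ _ W.
Qed.

Lemma hom_wb (f : T1 -> T2) : DBoo_mor C1 B1 C2 B2 f ->
  forall x y, wbelow C1 x y -> wbelow C2 (f x) (f y).
Proof.
move=> [[_ [_ [_ [_ Cf]]]] [R _]] x y W C; apply: W; apply: R.
by rewrite Cf.
Qed.

Lemma keyL (f : T1 -> T2) : DBoo_mor C1 B1 C2 B2 f ->
  forall x y, wbelow C1 x y -> f x <= vee C1 B1 f y.
Proof.
move=> hf x y W; set j := vee C1 B1 f y.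
rewrite leP_meet; case: eqP => // /eqP /(BC3 H2) [b' [Bb' [nb' Wb']]].
exfalso.
have := wb_le H2 Wb'; rewrite lexI => /andP [b'x b'j].
case: hf => hb [_ Ex]; case: (Ex b' Bb') => e [Be b'e].
have Bxe : B1 (x `&` e) by apply: (Bdown H1 (leIr _ _)).
have Wxe : wbelow C1 (x `&` e) y by apply: (wb_mono H1 (leIl _ _) W (le_refl _)).
have := vee_ub f Bxe Wxe; rewrite -/j.
case: hb => _ [_ [M _]]; rewrite M => le1.
have : b' <= j `&` ~` j.
  by rewrite lexI b'j andbT; apply: le_trans le1; rewrite lexI b'x.
by rewrite meetxC lex0 (negbTE nb').
Qed.

End Vee.

Section Extra.
Context {d : Order.disp_t} {T : ctbDistrLatticeType d}.

Lemma shiftE (x y z : T) : (x `&` y <= z) = (y <= ~` x `|` z).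
Proof.
apply/idP/idP => h.
  have -> : y = (y `&` x) `|` (y `&` ~` x) by rewrite -meetUr joinxC meetx1.
  rewrite leUx; apply/andP; split.
    by rewrite meetC; apply: le_trans h (leUr _ _).
  exact: le_trans (leIr _ _) (leUl _ _).
apply: le_trans (leI2 (le_refl x) h) _.
by rewrite meetUr meetxC join0x leIr.
Qed.

Lemma wb_meet (C : T -> T -> Prop) (B : T -> Prop) : complete_LCA C B ->
  forall x y a b, wbelow C x a -> wbelow C y b -> wbelow C (x `&` y) (a `&` b).
Proof.
move=> H x y a b Wa Wb.
have Wa' := wb_mono H (leIl _ _) Wa (le_refl _).
have Wb' := wb_mono H (leIr _ _) Wb (le_refl _).
case: H => _ [[_ [_ [_ J]]] _].
rewrite /wbelow complI => /J [] X; [exact: Wa' X | exact: Wb' X].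
Qed.

End Extra.

Theorem proposition4p1
  (d1 d2 d3 : Order.disp_t) (T1 : ctbDistrLatticeType d1)
  (T2 : ctbDistrLatticeType d2) (T3 : ctbDistrLatticeType d3)
  (C1 : T1 -> T1 -> Prop) (B1 : T1 -> Prop)
  (C2 : T2 -> T2 -> Prop) (B2 : T2 -> Prop)
  (C3 : T3 -> T3 -> Prop) (B3 : T3 -> Prop) :
  complete_LCA C1 B1 -> complete_LCA C2 B2 -> complete_LCA C3 B3 ->
  (* V sends DBoo-morphisms to CLCA-morphisms *)
  (forall phi : T1 -> T2, DBoo_mor C1 B1 C2 B2 phi ->
     CLCA_mor C1 B1 C2 B2 (vee C1 B1 phi)) /\
  (* V preserves identities *)
  (vee C1 B1 (fun a : T1 => a) = (fun a : T1 => a)) /\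
  (* V preserves composition *)
  (forall (phi : T1 -> T2) (psi : T2 -> T3),
     DBoo_mor C1 B1 C2 B2 phi -> DBoo_mor C2 B2 C3 B3 psi ->
     vee C1 B1 (fun a => psi (phi a)) =
     CLCA_comp C1 B1 (vee C2 B2 psi) (vee C1 B1 phi)).
Proof.
move=> H1 H2 H3; split; last split.
- move=> phi hphi.
  have hb : boolean_hom phi by case: hphi.
  have [p0 [p1 [pI [pU pC]]]] := hb.
  split; last split; last split; last split.
  + apply/eqP; rewrite -lex0; apply: (vee_least H2) => b Bb W.
    have := wb_le H1 W; rewrite lex0 => /eqP ->; by rewrite p0.
  + move=> a b; apply/le_anti/andP; split.
      by rewrite lexI !(vee_mono H1 H2) ?leIl ?leIr.
    rewrite shiftE; apply: (vee_least H2) => c Bc Wc.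
    rewrite -shiftE meetC shiftE; apply: (vee_least H2) => c' Bc' Wc'.
    rewrite -shiftE -pI; apply: (vee_ub H2).
      exact: (Bdown H1 (leIl _ _)).
    rewrite (meetC c); exact: (wb_meet H1 Wc' Wc).
  + move=> a b Wab Ba.
    have [c [Bc [Wac Wcb]]] := BC1 H1 Wab Ba.
    have [c' [Bc' [Wcc' Wc'b]]] := BC1 H1 Wcb Bc.
    have e1 : ~` vee C1 B1 phi (~` a) <= phi c.
      rewrite leCx -pC; apply: (keyL H1 H2 hphi); exact: (wb_compl H1 Wac).
    have e2 : phi c' <= vee C1 B1 phi b by apply: (vee_ub H2).
    exact: (wb_mono H2 e1 (hom_wb hphi Wcc') e2).
  + move=> b Bb; have [_ [_ Ex]] := hphi; have [e [Be be]] := Ex b Bb.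
    have [c [Bc [Wec _]]] := BC1 H1 (@wb_top _ _ _ _ H1 e) Be.
    exists c; split => //; apply: le_trans be _; exact: (keyL H1 H2 hphi Wec).
  + move=> a; apply/le_anti/andP; split.
      apply: (vee_least H2) => b Bb Wb.
      have [c [Bc [Wbc Wca]]] := BC1 H1 Wb Bb.
      apply: le_trans (keyL H1 H2 hphi Wbc) _; exact: (vee_ub H2).
    apply: (vee_least H2) => b Bb Wb; apply: (vee_mono H1 H2); exact: (wb_le H1 Wb).
- apply: functional_extensionality => a; apply/le_anti/andP; split.
    by apply: (vee_least H1) => b _ W; exact: (wb_le H1 W).
  set j := vee _ _ _ a.
  rewrite leP_meet; case: eqP => // /eqP /(BC3 H1) [b [Bb [nb Wb]]]; exfalso.
  have := wb_le H1 Wb; rewrite lexI => /andP [ba bj].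
  have : b <= j by apply: (vee_ub H1) => //; exact: (wb_mono H1 (le_refl _) Wb (leIl _ _)).
  move=> bj'; have : b <= j `&` ~` j by rewrite lexI bj' bj.
  by rewrite meetxC lex0 (negbTE nb).
- move=> phi psi hphi hpsi; apply: functional_extensionality => a.
  rewrite /CLCA_comp.
  have hbphi : boolean_hom phi by case: hphi.
  have hbpsi : boolean_hom psi by case: hpsi.
  apply/le_anti/andP; split.
    apply: (vee_least H3) => b Bb Wb.
    have [c [Bc [Wbc Wca]]] := BC1 H1 Wb Bb.
    have [c' [Bc' [Wbc' Wc'c]]] := BC1 H1 Wbc Bb.
    apply: le_trans _ (vee_ub H3 _ Bc Wca).
    apply: (keyL H2 H3 hpsi).
    apply: (wb_mono H2 (le_refl _) (hom_wb hphi Wbc')).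
    exact: (vee_ub H2).
  apply: (vee_least H3) => b Bb Wb.
  apply: le_trans (vee_le_f H2 H3 hbpsi _) _.
  apply: le_trans (hom_mono hbpsi (vee_le_f H1 H2 hbphi b)) _.
  exact: (vee_ub H3 (fun x => psi (phi x)) Bb Wb).
Qed.
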